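(* Let $T:X\to X$ be a continuous map on a Hausdorff topological space, $x\in X$ and $N\in\mathbb{N}$. The following are equivalent: (i) $x$ is periodic for $T$ with period strictly less than $N$ (i.e. $T^px=x$ for some $1\leq p<N$); (ii) for every neighbourhood $U$ of $x$ there is $n_U\in\mathbb{N}_0$ with $\#\big(N(x,U)\cap[n_U+1,n_U+N]\big)\geq2$; (iii) for every neighbourhood $U$ of $x$ there is $1\leq p<N$ with $T^p(U)\cap U\neq\varnothing$.
   Context: $N(x,U)=\{n\in\mathbb{N}_0:T^nx\in U\}$. *)

(* Defs.v *)
From HB Require Import structures.
From mathcomp Require Import all_boot all_order all_algebra.
From mathcomp Require Import all_classical all_reals all_analysis.
Set Implicit Arguments. Unset Strict Implicit. Unset Printing Implicit Defensive.
Local Open Scope classical_set_scope.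

Definition Nret (X : Type) (T : X -> X) (x : X) (U : set X) : set nat :=
  [set n : nat | U (iter n T x)].

(* Main.v *)
Require Import Defs.
From HB Require Import structures.
From mathcomp Require Import all_boot all_order all_algebra.
From mathcomp Require Import all_classical all_reals all_analysis.
From mathcomp Require Import zify.
Local Open Scope classical_set_scope.

Lemma cont_iter (X : topologicalType) (T : X -> X) (hT : continuous T) n :
  continuous (iter n T).
Proof.
elim: n => [|n IH] /=; first by move=> y.
move=> y; apply: continuous_comp; [exact: IH | exact: hT].
Qed.

Lemma sep_nbhs (X : topologicalType) (T : X -> X) (x : X) (N : nat)
  (hX : hausdorff_space X) (hT : continuous T) :
  (forall p, (1 <= p < N)%N -> iter p T x <> x) ->
  forall M, (M <= N)%N -> exists U, nbhs x U /\
    forall p, (1 <= p < M)%N -> (iter p T @` U) `&` U = set0.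
Proof.
move=> hnp; elim=> [|M IH] hM.
  by exists setT; split; [exact: filterT | move=> p; lia].
have [U [hU hUp]] := IH (ltnW hM).
case: (eqVneq M 0) => [->|M0].
  by exists U; split => // p; lia.
have hne : iter M T x <> x by apply: hnp; lia.
have : ~ cluster (nbhs x) (iter M T x) by move=> /hX H; exact: hne (esym H).
move=> /existsNP [A] /existsNP [B] /not_implyP [hA] /not_implyP [hB] hAB.
exists (U `&` A `&` (iter M T @^-1` B)); split.
  apply: filterI; first exact: filterI.
  exact: (@cont_iter _ _ hT M x B hB).
move=> p hp; apply/seteqP; split => // z [[w [[hwU hwA] hwB] <-]] [[hzU hzA] _].
case: (eqVneq p M) => [epM|].
  by apply: hAB; exists (iter p T w); split => //; rewrite epM.
move=> pM.
have : (iter p T @` U) `&` U = set0 by apply: hUp; lia.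
by move=> /seteqP [+ _] => /(_ (iter p T w)); apply; split => //; exists w.
Qed.

Theorem mainTheorem10 (X : topologicalType) (T : X -> X) (x : X) (N : nat)
  (hX : hausdorff_space X) (hT : continuous T) :
  [/\ ((exists p : nat, (1 <= p < N)%N /\ iter p T x = x) <->
       (forall U : set X, nbhs x U -> exists nU : nat,
          (2 <= count (fun n => n \in Nret T x U) (iota nU.+1 N))%N)),
      ((forall U : set X, nbhs x U -> exists nU : nat,
          (2 <= count (fun n => n \in Nret T x U) (iota nU.+1 N))%N) <->
       (forall U : set X, nbhs x U -> exists p : nat,
          (1 <= p < N)%N /\ (iter p T @` U) `&` U != set0)) &
      ((exists p : nat, (1 <= p < N)%N /\ iter p T x = x) <->
       (forall U : set X, nbhs x U -> exists p : nat,
          (1 <= p < N)%N /\ (iter p T @` U) `&` U != set0))].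
Proof.
set P1 := (exists p : nat, _).
set P2 := (forall U : set X, nbhs x U -> exists nU : nat, _).
set P3 := (forall U : set X, nbhs x U -> exists p : nat, _).
have h12 : P1 -> P2.
  move=> [p [hp hpx]] U hU; exists p.-1; rewrite prednK; last by lia.
  have hxU : U x := nbhs_singleton hU.
  have [N' eN] : exists N', N = N'.+1 by exists N.-1; lia.
  rewrite eN; rewrite eN in hp.
  rewrite /=.
  have hin : forall m, iter m T x = x -> m \in Nret T x U.
    by move=> m hm; rewrite in_setE /Nret /= hm.
  have -> : (p \in Nret T x U) by apply: hin.
  have : (0 < count (fun n => n \in Nret T x U) (iota p.+1 N'))%N.
    rewrite -has_count; apply/hasP; exists (p + p)%N.
      rewrite mem_iota; lia.
    by apply: hin; rewrite iterD hpx hpx.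
  lia.
have h23 : P2 -> P3.
  move=> H U hU; have [nU hc] := H U hU.
  rewrite -size_filter in hc.
  have hs := sorted_filter ltn_trans (fun n => n \in Nret T x U)
     (iota_ltn_sorted nU.+1 N).
  have hmem := fun y => mem_filter (fun n => n \in Nret T x U) y (iota nU.+1 N).
  move: hc hs hmem.
    move: [seq n <- iota nU.+1 N | n \in Nret T x U] => s; case: s => [|n [|m r]] //= _ /andP [hnm _] hmem.
  have := hmem n; rewrite inE eqxx /= => /esym /andP [hn hn'].
  have := hmem m; rewrite !inE eqxx orbT /= => /esym /andP [hm hm'].
  rewrite mem_iota in hn'; rewrite mem_iota in hm'.
  rewrite in_setE /Nret /= in hn; rewrite in_setE /Nret /= in hm.
  exists (m - n)%N; split; first lia.
  apply/set0P; exists (iter m T x); split => //.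
  by exists (iter n T x) => //; rewrite -iterD subnK // ltnW.
have h31 : P3 -> P1.
  move=> H; apply: contrapT => hn.
  have hnp : forall p, (1 <= p < N)%N -> iter p T x <> x.
    by move=> p hp hpx; apply: hn; exists p.
  have [U [hU hUp]] := @sep_nbhs _ _ _ _ hX hT hnp N (leqnn N).
  have [p [hp hne]] := H U hU.
  by move: hne; rewrite hUp // eqxx.
split; split; auto.
Qed.
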